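(* Let $n\ge 1$, let $C$ be a convex subset of $\mathbb{R}^n$, let $M$ be a smooth manifold, and let $f:\mathbb{R}^n\to M$ be a differentiable function. If $\mathrm{Sens}_C(f)=S_n$, then $f$ is one-to-one on $C$.
   Context: Sign of a real number: $\mathrm{sgn}(x)=+1,0,-1$ according as $x>0$, $x=0$, $x<0$. For $g:\mathbb{R}^n\to\mathbb{R}$ and a nonempty $C\subseteq\mathbb{R}^n$, define $\mathrm{sign}_C(g)=+1$ if $g(c)>0$ for all $c\in C$; $0$ if $g(c)=0$ for all $c\in C$; $-1$ if $g(c)<0$ for all $c\in C$; and $u$ (a formal symbol) otherwise. If $g$ is differentiable on $C$, its total sign over $C$ is the tuple $\mathrm{Sign}_C(g)=\big(\mathrm{sign}_C(\partial g/\partial x_1),\dots,\mathrm{sign}_C(\partial g/\partial x_n)\big)\in\{1,0,-1,u\}^n$. $S_n$ denotes the set of all nonzero $n$-tuples $s=(s_1,\dots,s_n)\in\{-1,0,1\}^n$ whose first nonzero entry equals $1$. A tuple $t=(t_1,\dots,t_n)\in\{1,0,-1,u\}^n$ eliminates $s\in S_n$ if: (i) $t_i\neq0$ and $s_i\neq0$ for some $i$; (ii) there is $k\in\{+1,-1\}$ with $t_i=k s_i$ for all $i$ such that $s_i\neq 0$ and $t_i\neq0$; (iii) $s_i=0$ whenever $t_i=u$. For a smooth manifold $M$, a convex $C\subseteq\mathbb{R}^n$ and a differentiable $f:\mathbb{R}^n\to M$, $\mathrm{Sens}_C(f)$ is the set of all $v\in S_n$ for which there exists a differentiable function $\pi:M\to\mathbb{R}$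 such that $\mathrm{Sign}_C(\pi\circ f)$ eliminates $v$. *)

(* Defs.v *)
From Stdlib Require Import Reals Lra Lia ZArith Arith.
Open Scope R_scope.

(** * Points of R^n
    A point of R^n is a function [nat -> R] vanishing at indices >= n
    (coordinates x_1..x_n are indices 0..n-1). *)
Record Vec (n : nat) := mkVec {
  vc :> nat -> R;
  vsupp : forall i, (n <= i)%nat -> vc i = 0 }.
Arguments mkVec {n} _ _.
Arguments vc {n} _ _.

Definition vadd {n} (x y : Vec n) : Vec n.
Proof.
  refine (mkVec (fun i => vc x i + vc y i) _).
  intros i Hi; rewrite (vsupp n x i Hi), (vsupp n y i Hi); ring.
Defined.

Definition vscale {n} (t : R) (x : Vec n) : Vec n.
Proof.
  refine (mkVec (fun i => t * vc x i) _).
  intros i Hi; rewrite (vsupp n x i Hi); ring.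
Defined.

Definition vsub {n} (x y : Vec n) : Vec n := vadd x (vscale (-1) y).

Definition basis (n i : nat) : Vec n.
Proof.
  refine (mkVec (fun j => if andb (Nat.eqb j i) (Nat.ltb i n) then 1 else 0) _).
  intros j Hj. destruct (Nat.eqb_spec j i); destruct (Nat.ltb_spec i n); simpl;
  try reflexivity; lia.
Defined.

Fixpoint rsum (n : nat) (f : nat -> R) : R :=
  match n with O => 0 | S k => rsum k f + f k end.

(** l^1 norm (all norms on R^n are equivalent) *)
Definition vnorm {n} (x : Vec n) : R := rsum n (fun i => Rabs (vc x i)).

Definition open_set {n} (O : Vec n -> Prop) : Prop :=
  forall x, O x -> exists r, 0 < r /\ forall y, vnorm (vsub y x) < r -> O y.

Definition continuous_at_v {n} (g : Vec n -> R) (x : Vec n) : Prop :=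
  forall eps, 0 < eps -> exists delta, 0 < delta /\
    forall y, vnorm (vsub y x) < delta -> Rabs (g y - g x) < eps.

(** Frechet derivative of g : R^n -> R at x, with gradient l (l i = dg/dx_{i+1}) *)
Definition frechet {n} (g : Vec n -> R) (x : Vec n) (l : nat -> R) : Prop :=
  forall eps, 0 < eps -> exists delta, 0 < delta /\
    forall h : Vec n, vnorm h < delta ->
      Rabs (g (vadd x h) - g x - rsum n (fun i => l i * vc h i)) <= eps * vnorm h.

Definition differentiable_at {n} (g : Vec n -> R) (x : Vec n) : Prop :=
  exists l, frechet g x l.

Fixpoint Ck {m} (k : nat) (U : Vec m -> Prop) (g : Vec m -> R) : Prop :=
  match k with
  | O => forall x, U x -> continuous_at_v g x
  | S k' => exists dg : nat -> Vec m -> R,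
      (forall x, U x -> frechet g x (fun i => dg i x)) /\
      (forall i, (i < m)%nat -> Ck k' U (dg i))
  end.

Definition smooth_on {m} (U : Vec m -> Prop) (g : Vec m -> R) : Prop :=
  forall k, Ck k U g.

Definition smooth_map_on {m p} (U : Vec m -> Prop) (T : Vec m -> Vec p) : Prop :=
  forall j, (j < p)%nat -> smooth_on U (fun x => vc (T x) j).

Record SmoothManifold := {
  mcar :> Type;
  mdim : nat;
  midx : Type;
  mdom : midx -> mcar -> Prop;
  mchart : midx -> mcar -> Vec mdim;
  m_cover : forall p, exists i, mdom i p;
  m_inj : forall i p q, mdom i p -> mdom i q -> mchart i p = mchart i q -> p = q;
  m_open : forall i j,
    open_set (fun x => exists p, mdom i p /\ mdom j p /\ mchart i p = x);
  m_compat : forall i j, exists T : Vec mdim -> Vec mdim,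
    smooth_map_on (fun x => exists p, mdom i p /\ mdom j p /\ mchart i p = x) T /\
    (forall p, mdom i p -> mdom j p -> T (mchart i p) = mchart j p);
  m_hausdorff : forall p q, p <> q -> exists O1 O2 : mcar -> Prop,
    (forall i, open_set (fun x => exists r, mdom i r /\ O1 r /\ mchart i r = x)) /\
    (forall i, open_set (fun x => exists r, mdom i r /\ O2 r /\ mchart i r = x)) /\
    O1 p /\ O2 q /\ (forall r, ~ (O1 r /\ O2 r));
  m_countable : exists e : midx -> nat, forall i j, e i = e j -> i = j
    (* countable atlas, equivalent to second countability *)
}.

Definition Mopen (M : SmoothManifold) (O : M -> Prop) : Prop :=
  forall i, open_set (fun x => exists r, mdom M i r /\ O r /\ mchart M i r = x).

Definition diff_into {n} (M : SmoothManifold) (f : Vec n -> M) : Prop :=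
  (forall O, Mopen M O -> open_set (fun x => O (f x))) /\
  (forall x i, mdom M i (f x) -> forall k, (k < mdim M)%nat ->
     differentiable_at (fun y => vc (mchart M i (f y)) k) x).

Definition diff_from (M : SmoothManifold) (pi : M -> R) : Prop :=
  forall p i, mdom M i p -> exists g : Vec (mdim M) -> R,
    (forall q, mdom M i q -> g (mchart M i q) = pi q) /\
    differentiable_at g (mchart M i p).

Definition partial {n} (g : Vec n -> R) (i : nat) (c : Vec n) (l : R) : Prop :=
  derivable_pt_lim (fun t => g (vadd c (vscale t (basis n i)))) 0 l.

Definition convex {n} (C : Vec n -> Prop) : Prop :=
  forall x y, C x -> C y -> forall t, 0 <= t <= 1 ->
    C (vadd (vscale (1 - t) x) (vscale t y)).

(** the values {1, 0, -1, u} *)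
Inductive Sgn := SPos | SZero | SNeg | SU.

(** sign_C(dg/dx_{i+1}) = t  (C nonempty, g differentiable on C) *)
Definition sign_partial {n} (g : Vec n -> R) (C : Vec n -> Prop) (i : nat) (t : Sgn) : Prop :=
  let P := forall c, C c -> exists l, partial g i c l /\ l > 0 in
  let Z := forall c, C c -> partial g i c 0 in
  let N := forall c, C c -> exists l, partial g i c l /\ l < 0 in
  match t with
  | SPos => P
  | SZero => Z
  | SNeg => N
  | SU => ~ P /\ ~ Z /\ ~ N
  end.

(** Sign_C(g) = t  (only the first n entries of t are meaningful) *)
Definition total_sign {n} (g : Vec n -> R) (C : Vec n -> Prop) (t : nat -> Sgn) : Prop :=
  (exists c, C c) /\
  (forall c, C c -> differentiable_at g c) /\
  forall i, (i < n)%nat -> sign_partial g C i (t i).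

Definition inS (n : nat) (s : nat -> Z) : Prop :=
  (forall i, s i = 1%Z \/ s i = 0%Z \/ s i = (-1)%Z) /\
  (forall i, (n <= i)%nat -> s i = 0%Z) /\
  (exists i, (i < n)%nat /\ s i <> 0%Z) /\
  (forall i, s i <> 0%Z -> (forall j, (j < i)%nat -> s j = 0%Z) -> s i = 1%Z).

Definition sgn_of_Z (z : Z) : Sgn :=
  match z with Z0 => SZero | Zpos _ => SPos | Zneg _ => SNeg end.

Definition eliminates (n : nat) (t : nat -> Sgn) (s : nat -> Z) : Prop :=
  (exists i, (i < n)%nat /\ t i <> SZero /\ s i <> 0%Z) /\
  (exists k : Z, (k = 1%Z \/ k = (-1)%Z) /\
     forall i, (i < n)%nat -> s i <> 0%Z -> t i <> SZero -> t i = sgn_of_Z (k * s i)) /\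
  (forall i, (i < n)%nat -> t i = SU -> s i = 0%Z).

Definition Sens {n} (M : SmoothManifold) (C : Vec n -> Prop) (f : Vec n -> M)
    (v : nat -> Z) : Prop :=
  inS n v /\ exists pi : M -> R, diff_from M pi /\
    exists t, total_sign (fun x => pi (f x)) C t /\ eliminates n t v.

(* Main.v *)
Require Import Defs.
From Stdlib Require Import Reals ZArith Lra Lia ClassicalEpsilon Classical FunctionalExtensionality ProofIrrelevance.
Open Scope R_scope.

Lemma vec_ext n (a b : Vec n) : (forall i, vc a i = vc b i) -> a = b.
Proof.
  destruct a as [a Ha], b as [b Hb]; simpl; intro H.
  assert (a = b) by (apply functional_extensionality; auto). subst.
  f_equal; apply proof_irrelevance.
Qed.

Lemma rsum_ext m f g : (forall i, (i < m)%nat -> f i = g i) -> rsum m f = rsum m g.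
Proof. induction m; simpl; intros; auto. rewrite IHm by (intros; apply H; lia). rewrite H by lia; auto. Qed.

Lemma rsum_scal m s f : rsum m (fun i => s * f i) = s * rsum m f.
Proof. induction m; simpl; [ring|]. rewrite IHm; ring. Qed.

Lemma rsum_nonneg m f : (forall i, (i < m)%nat -> 0 <= f i) -> 0 <= rsum m f.
Proof. induction m; simpl; intros; [lra|]. assert (0 <= f m) by (apply H; lia).
  assert (0 <= rsum m f) by (apply IHm; intros; apply H; lia). lra. Qed.

Lemma rsum_pos m f i1 : (forall i, (i < m)%nat -> 0 <= f i) -> (i1 < m)%nat -> 0 < f i1 -> 0 < rsum m f.
Proof. induction m; simpl; intros; [lia|].
  destruct (Nat.eq_dec i1 m).
  - subst. assert (0 <= rsum m f) by (apply rsum_nonneg; intros; apply H; lia). lra.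
  - assert (0 <= f m) by (apply H; lia).
    assert (0 < rsum m f) by (apply IHm; auto; lia). lra. Qed.

Lemma rsum_basis n i l m : (i < n)%nat ->
  rsum m (fun j => l j * vc (basis n i) j) = if Nat.ltb i m then l i else 0.
Proof.
  intro Hi. induction m; cbn [rsum]; [reflexivity|]. rewrite IHm. simpl.
  destruct (Nat.eqb_spec m i); destruct (Nat.ltb_spec i n); try lia; simpl.
  - subst. destruct (Nat.ltb_spec i i); destruct (Nat.ltb_spec i (S i)); try lia. ring.
  - destruct (Nat.ltb_spec i m); destruct (Nat.ltb_spec i (S m)); try lia; ring.
Qed.

Lemma vnorm_nonneg n (d : Vec n) : 0 <= vnorm d.
Proof. apply rsum_nonneg; intros; apply Rabs_pos. Qed.

Lemma dir_deriv n (g : Vec n -> R) c l (d : Vec n) : frechet g c l ->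
  derivable_pt_lim (fun s => g (vadd c (vscale s d))) 0 (rsum n (fun i => l i * vc d i)).
Proof.
  intros Hf eps He. set (N := vnorm d). assert (HN : 0 <= N) by apply vnorm_nonneg.
  destruct (Hf (eps / (2 * (N + 1)))) as [del [Hdel H]].
  { apply Rdiv_lt_0_compat; lra. }
  assert (Hp : 0 < del / (N + 1)) by (apply Rdiv_lt_0_compat; lra).
  exists (mkposreal _ Hp). intros s Hs0 Hs. simpl in Hs.
  rewrite Rplus_0_l.
  replace (vadd c (vscale 0 d)) with c by (apply vec_ext; intro i; simpl; ring).
  assert (Hvn : vnorm (vscale s d) = Rabs s * N).
  { unfold N, vnorm. rewrite <- rsum_scal. apply rsum_ext; intros; simpl. apply Rabs_mult. }
  assert (Hsum : rsum n (fun i => l i * vc (vscale s d) i) = s * rsum n (fun i => l i * vc d i)).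
  { rewrite <- rsum_scal. apply rsum_ext; intros; simpl. ring. }
  assert (Has : 0 < Rabs s) by (apply Rabs_pos_lt; auto).
  assert (Hlt : Rabs s * N < del).
  { assert (Rabs s * (N+1) < del).
    { apply (Rmult_lt_compat_r (N+1)) in Hs; [|lra].
      unfold Rdiv in Hs. rewrite Rmult_assoc, Rinv_l in Hs by lra. lra. }
    nra. }
  specialize (H (vscale s d)). rewrite Hvn, Hsum in H. specialize (H Hlt).
  set (X := g (vadd c (vscale s d)) - g c - s * rsum n (fun i => l i * vc d i)) in *.
  replace ((g (vadd c (vscale s d)) - g c) / s - rsum n (fun i => l i * vc d i)) with (X * / s)
    by (unfold X; field; auto).
  rewrite Rabs_mult, Rabs_inv.
  assert (HX : Rabs X < eps * Rabs s).
  { assert (eps / (2 * (N + 1)) * (Rabs s * N) < eps * Rabs s).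
    { unfold Rdiv. 
      assert (N * / (2 * (N+1)) < 1).
      { apply (Rmult_lt_reg_r (2*(N+1))); [lra|]. rewrite Rmult_assoc, Rinv_l by lra. lra. }
      assert (0 < eps * Rabs s) by nra.
      replace (eps * / (2 * (N + 1)) * (Rabs s * N)) with ((eps * Rabs s) * (N * / (2 * (N+1)))) by ring.
      nra. }
    lra. }
  apply (Rmult_lt_reg_r (Rabs s)); auto. rewrite Rmult_assoc, Rinv_l by lra. lra.
Qed.

Lemma shift_deriv (F1 F2 : R -> R) t L : (forall s, F1 s = F2 (t + s)) ->
  derivable_pt_lim F1 0 L -> derivable_pt_lim F2 t L.
Proof.
  intros HF H eps He. destruct (H eps He) as [del Hd]. exists del. intros hh H0 H1.
  specialize (Hd hh H0 H1). rewrite Rplus_0_l, HF, (HF 0), Rplus_0_r in Hd. exact Hd.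
Qed.

Lemma partial_of_frechet n (g : Vec n -> R) c l i : (i < n)%nat -> frechet g c l -> partial g i c (l i).
Proof.
  intros Hi Hf. unfold partial. pose proof (dir_deriv n g c l (basis n i) Hf) as H.
  rewrite rsum_basis in H by auto. destruct (Nat.ltb_spec i n); [exact H|lia].
Qed.

Lemma sign_at n (g : Vec n -> R) C i ti c L : sign_partial g C i ti -> C c -> partial g i c L ->
  (ti = SPos -> L > 0) /\ (ti = SNeg -> L < 0) /\ (ti = SZero -> L = 0).
Proof.
  intros Hs Hc Hp. unfold partial in Hp.
  repeat split; intro; subst; simpl in Hs.
  - destruct (Hs c Hc) as [l [Hl Hl0]]. unfold partial in Hl. rewrite (uniqueness_limite _ _ _ _ Hp Hl); auto.
  - destruct (Hs c Hc) as [l [Hl Hl0]]. unfold partial in Hl. rewrite (uniqueness_limite _ _ _ _ Hp Hl); auto.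
  - specialize (Hs c Hc). unfold partial in Hs. exact (uniqueness_limite _ _ _ _ Hp Hs).
Qed.

Lemma min_index (P : nat -> Prop) : (exists i, P i) -> exists i, P i /\ forall j, (j < i)%nat -> ~ P j.
Proof.
  intros [i Hi]. revert Hi. induction i as [i IH] using (well_founded_induction lt_wf).
  intro Hi. destruct (classic (exists j, (j < i)%nat /\ P j)) as [[j [Hj Pj]]|Hn].
  - exact (IH j Hj Pj).
  - exists i. split; auto. intros j Hj Pj. apply Hn; eauto.
Qed.

Definition sz (r : R) : Z :=
  if Rlt_dec 0 r then 1%Z else if Rlt_dec r 0 then (-1)%Z else 0%Z.

Lemma IZRm1 : IZR (-1) = -1. Proof. reflexivity. Qed.

Lemma term_sign (k : Z) (ti : Sgn) (a di L : R) :
  (k = 1%Z \/ k = (-1)%Z) -> a <> 0 ->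
  (sz (a * di) <> 0%Z -> ti <> SZero -> ti = sgn_of_Z (k * sz (a * di))) ->
  (ti = SU -> sz (a * di) = 0%Z) ->
  (ti = SPos -> L > 0) -> (ti = SNeg -> L < 0) -> (ti = SZero -> L = 0) ->
  0 <= IZR k * a * (L * di) /\ (sz (a * di) <> 0%Z -> ti <> SZero -> 0 < IZR k * a * (L * di)).
Proof.
  intros Hk Ha Hel Hu HP HN HZ.
  unfold sz in *.
  destruct Hk as [Hk|Hk]; subst k; [change (IZR 1) with 1 | idtac];
  destruct ti; destruct (Rlt_dec 0 (a*di)); destruct (Rlt_dec (a*di) 0); simpl in *;
  try (assert (L>0) by (apply HP; reflexivity));
  try (assert (L<0) by (apply HN; reflexivity));
  try (assert (L=0) by (apply HZ; reflexivity));
  try (assert (a*di = 0) by lra);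
  try (exfalso; assert (Hc := Hel ltac:(discriminate) ltac:(discriminate)); discriminate Hc);
  try (exfalso; specialize (Hu eq_refl); discriminate);
  assert (a*(L*di) = L*(a*di)) by ring;
  split; try (intros; congruence); try nra; intros;
  try nra; match goal with H0 : a * di = 0 |- _ => assert (E : L * (a * di) = 0) by (rewrite H0; ring) end; nra.
Qed.

Theorem theorem3p1 (n : nat) (Hn : (1 <= n)%nat) (C : Vec n -> Prop)
  (HC : convex C) (M : SmoothManifold) (f : Vec n -> M) (Hf : diff_into M f)
  (HSens : forall v : nat -> Z, Sens M C f v <-> inS n v) :
  forall x y : Vec n, C x -> C y -> f x = f y -> x = y.
Proof.
  intros x y Hx Hy Hfxy. apply NNPP; intro Hne.
  set (d := vsub y x).
  assert (Hex : exists i, (i < n)%nat /\ vc d i <> 0).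
  { apply NNPP; intro Hn'. apply Hne. apply vec_ext. intro i.
    destruct (Nat.lt_ge_cases i n) as [H|H].
    - apply NNPP; intro Hxy. apply Hn'. exists i. split; auto.
      unfold d, vsub; simpl. intro; apply Hxy; lra.
    - rewrite (vsupp n x i H), (vsupp n y i H); reflexivity. }
  destruct (min_index _ Hex) as [i0 [[Hi0 Ha] Hmin]].
  set (a := vc d i0) in *.
  set (v := fun i => if Nat.ltb i n then sz (a * vc d i) else 0%Z).
  assert (Hd0 : forall j, (j < i0)%nat -> vc d j = 0).
  { intros j Hj. apply NNPP; intro. apply (Hmin j Hj). split; [lia|auto]. }
  assert (Hvi : forall i, (i < n)%nat -> v i = sz (a * vc d i)).
  { intros i Hi. unfold v. destruct (Nat.ltb_spec i n); [reflexivity|lia]. }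
  assert (Hv0 : v i0 = 1%Z).
  { rewrite Hvi by auto. fold a. unfold sz. destruct (Rlt_dec 0 (a * a)); [reflexivity|].
    exfalso. apply n0. nra. }
  assert (HinS : inS n v).
  { split; [|split; [|split]].
    - intro i. unfold v, sz. destruct (Nat.ltb i n); auto.
      destruct (Rlt_dec 0 (a * vc d i)); auto. destruct (Rlt_dec (a * vc d i) 0); auto.
    - intros i Hi. unfold v. destruct (Nat.ltb_spec i n); [lia|reflexivity].
    - exists i0. rewrite Hv0. split; [auto|discriminate].
    - intros i Hi Hj. destruct (lt_eq_lt_dec i i0) as [[h|h]|h].
      + exfalso. apply Hi. rewrite Hvi by lia. rewrite Hd0 by auto. rewrite Rmult_0_r.
        unfold sz. destruct (Rlt_dec 0 0); [lra|]. destruct (Rlt_dec 0 0); [lra|reflexivity].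
      + subst; auto.
      + rewrite (Hj i0 h) in Hv0. discriminate. }
  apply HSens in HinS.
  destruct HinS as [_ [pi [Hpi [t [[Hne' [Hdiff Hsgn]] [[i1 [Hi1 [Ht1 Hs1]]] [[k [Hk Hel2]] Hel3]]]]]]].
  set (g := fun z => pi (f z)) in *.
  set (p := fun s => vadd (vscale (1 - s) x) (vscale s y)).
  assert (HpC : forall s, 0 <= s <= 1 -> C (p s)) by (intros s Hs; apply HC; auto).
  assert (HFex : exists F : R -> nat -> R, forall s, 0 <= s <= 1 -> frechet g (p s) (F s)).
  { apply (choice (fun s l => 0 <= s <= 1 -> frechet g (p s) l)). intro s.
    destruct (classic (0 <= s <= 1)) as [Hs|Hs].
    - destruct (Hdiff _ (HpC s Hs)) as [l Hl]. exists l; auto.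
    - exists (fun _ => 0). intro; contradiction. }
  destruct HFex as [F HF].
  set (h' := fun s => rsum n (fun i => F s i * vc d i)).
  assert (Hder : forall s, 0 <= s <= 1 -> derivable_pt_lim (fun s => g (p s)) s (h' s)).
  { intros s Hs. apply shift_deriv with (F1 := fun u => g (vadd (p s) (vscale u d))).
    - intro u. f_equal. apply vec_ext. intro i. unfold p, d, vsub; simpl. ring.
    - apply dir_deriv. apply HF; auto. }
  destruct (MVT_cor2 (fun s => g (p s)) h' 0 1 Rlt_0_1 Hder) as [c [Hc1 Hc2]].
  assert (E0 : p 0 = x) by (apply vec_ext; intro; unfold p; simpl; ring).
  assert (E1 : p 1 = y) by (apply vec_ext; intro; unfold p; simpl; ring).
  cbv beta in Hc1. rewrite E0, E1 in Hc1. unfold g in Hc1. rewrite Hfxy in Hc1.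
  assert (Hcc : 0 <= c <= 1) by lra.
  assert (Hpos : 0 < IZR k * a * h' c).
  { unfold h'. rewrite <- rsum_scal. apply rsum_pos with i1; auto.
    - intros i Hi.
      destruct (sign_at n g C i (t i) (p c) (F c i) (Hsgn i Hi) (HpC c Hcc)
        (partial_of_frechet n g (p c) (F c) i Hi (HF c Hcc))) as [HP [HN HZ]].
      refine (proj1 (term_sign k (t i) a (vc d i) (F c i) Hk Ha _ _ HP HN HZ)).
      + rewrite <- Hvi by auto. intros; apply Hel2; auto.
      + rewrite <- Hvi by auto. intros; apply Hel3; auto.
    - destruct (sign_at n g C i1 (t i1) (p c) (F c i1) (Hsgn i1 Hi1) (HpC c Hcc)
        (partial_of_frechet n g (p c) (F c) i1 Hi1 (HF c Hcc))) as [HP [HN HZ]].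
      refine (proj2 (term_sign k (t i1) a (vc d i1) (F c i1) Hk Ha _ _ HP HN HZ) _ Ht1).
      + rewrite <- Hvi by auto. intros; apply Hel2; auto.
      + rewrite <- Hvi by auto. intros; apply Hel3; auto.
      + rewrite <- Hvi by auto. auto. }
  assert (h' c = 0) by lra. rewrite H in Hpos. lra.
Qed.
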